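(* Let $p$ be an odd prime, $n$ a positive integer and $i$ an integer with $0\le i\le n/2$ and $p\nmid i$. Then $$v_p\!\left(\binom{2(n-i)}{n-i}^2\binom{n-i}{i}\right)\ge v_p(n).$$
   Context: $v_p$ denotes the $p$-adic valuation. *)

(* Defs.v *)
From mathcomp Require Import all_boot.

(* Main.v *)
Require Import Defs.
From mathcomp Require Import all_boot zify.
Lemma small2 x d : x < 2 * d -> x = (d <= x) * d + x %% d.
Proof.
move=> h; case: (leqP d x) => hd /=.
  have -> : x = d + (x - d) by lia.
  rewrite modnDl modn_small; lia.
by rewrite modn_small //; lia.
Qed.
Lemma key d m i : 0 < d -> d %| m + i -> ~~ (d %| i) -> i <= m ->
  (d <= m %% d + m %% d) || (d <= i %% d + (m - i) %% d).
Proof.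
move=> d0 h1 h2 im.
have l1 := ltn_pmod m d0. have l2 := ltn_pmod i d0. have l3 := ltn_pmod (m-i) d0.
have r0 : 0 < i %% d by rewrite lt0n; exact: h2.
have E1 : (m %% d + i %% d) %% d = 0 by rewrite modnDm; apply/eqP.
have E2 : (i %% d + (m-i) %% d) %% d = m %% d by rewrite modnDm subnKC.
have S1 := small2 (m %% d + i %% d) d.
have S2 := small2 (i %% d + (m-i) %% d) d.
rewrite E1 in S1; rewrite E2 in S2.
move: S1 S2 l1 l2 l3 r0.
generalize (m %% d) (i %% d) ((m - i) %% d) => s r t.
clear h1 h2 im E1 E2.
case: (leqP d (s + r)) => a1;
case: (leqP d (r + t)) => a2;
case: (leqP d (s + s)) => a3 //= S1 S2 *; rewrite ?mul1n ?mul0n ?add0n in S1 S2; lia.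
Qed.

Lemma logn_fact_ext p n N : prime p -> n <= N ->
  logn p n`! = \sum_(1 <= k < N.+1) n %/ p ^ k.
Proof.
move=> pp nN; rewrite logn_fact //.
rewrite (@big_cat_nat _ _ _ n.+1 1 N.+1) //= -[LHS]addn0; congr (_ + _).
rewrite big_nat_cond big1 // => k /andP[/andP[hk _] _]; apply: divn_small.
apply: leq_trans hk _; apply: ltnW; apply: ltn_expl; exact: prime_gt1.
Qed.

Lemma logn_bin p a b N : prime p -> a + b <= N ->
  logn p 'C(a + b, a) = \sum_(1 <= k < N.+1) (p ^ k <= a %% p ^ k + b %% p ^ k).
Proof.
move=> pp hN.
have := bin_fact (leq_addr b a); rewrite addKn => E.
have := congr1 (logn p) E.
rewrite !lognM ?muln_gt0 ?fact_gt0 ?bin_gt0 ?leq_addr //.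
rewrite !(@logn_fact_ext p _ N) //; last 2 first.
- by apply: leq_trans hN; apply: leq_addl.
- by apply: leq_trans hN; apply: leq_addr.
under [X in _ = X]eq_bigr => k _ do rewrite divnD ?expn_gt0 ?prime_gt0 //.
rewrite !big_split /=; lia.
Qed.

Theorem proposition16 (p n i : nat) :
  prime p -> odd p -> 0 < n -> 2 * i <= n -> ~~ (p %| i) ->
  logn p n <= logn p ('C(2 * (n - i), n - i) ^ 2 * 'C(n - i, i)).
Proof.
move=> pp _ n0 hi hpi.
set m := n - i.
have im : i <= m by rewrite /m; lia.
have nm : n = m + i by rewrite /m; lia.
set K := logn p n.
have KN : K <= m + m.
  have h1 : p ^ K <= n by apply: dvdn_leq => //; apply: pfactor_dvdnn.
  have h2 : K < p ^ K by apply: ltn_expl; exact: prime_gt1.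
  lia.
have -> : 2 * m = m + m by lia.
have -> : 'C(m, i) = 'C(i + (m - i), i) by rewrite subnKC.
rewrite lognM ?expn_gt0 ?bin_gt0 ?leq_addr ?leq_addl // lognX.
rewrite (@logn_bin p m m (m + m)) // (@logn_bin p i (m - i) (m + m)) //; last first.
  by rewrite subnKC //; lia.
apply: (@leq_trans (\sum_(1 <= k < (m+m).+1)
   ((p ^ k <= m %% p ^ k + m %% p ^ k) + (p ^ k <= i %% p ^ k + (m - i) %% p ^ k)))); last first.
  rewrite big_split /= mul2n -addnn; lia.
rewrite (@big_cat_nat _ _ _ K.+1 1 (m+m).+1) //=; apply: leq_trans (leq_addr _ _).
apply: (@leq_trans (\sum_(1 <= k < K.+1) 1)).
  by rewrite sum_nat_const_nat; lia.
rewrite big_nat_cond [X in _ <= X]big_nat_cond; apply: leq_sum => k /andP[/andP[k1 kK] _].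
have d0 : 0 < p ^ k by rewrite expn_gt0 prime_gt0.
have hd : p ^ k %| m + i.
  rewrite -nm; apply: (dvdn_trans _ (pfactor_dvdnn p n)); apply: dvdn_exp2l; lia.
have hnd : ~~ (p ^ k %| i).
  apply/negP => h; move/negP: hpi; apply; apply: dvdn_trans h.
  by rewrite -{1}(expn1 p); apply: dvdn_exp2l.
by case/orP: (@key (p ^ k) m i d0 hd hnd im) => ->; rewrite ?addn1.
Qed.
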